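(* Let $S=(P,L)$ be a slim dense near hexagon, let $Q_1,Q_2$ be two disjoint big quads of $S$, and let $Y$ be the subspace of $S$ generated by $Q_1\cup Q_2$. For $\{i,j\}=\{1,2\}$ and $x\in P\setminus Y$, let $x^{j}$ denote the unique point of $Q_j$ at distance $1$ from $x$, and for $y\in Q_i$ let $z_y$ denote the unique point of $Q_j$ at distance $1$ from $y$. Let $\ell$ be a line of $S$ disjoint from $Y$ and let $x,y\in\ell$ with $x\neq y$. Then the line $x^{1}y^{1}$ equals the line $x^{1}z_{x^{2}}$ if and only if the line $x^{2}y^{2}$ equals the line $x^{2}z_{x^{1}}$. Moreover, if $x^{1}y^{1}=x^{1}z_{x^{2}}$, then $(y^{1},y^{2})=(z_{x^{2}},\,x^{2}\ast z_{x^{1}})$ or $(y^1,y^2)=(x^{1}\ast z_{x^{2}},\,z_{x^{1}})$.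
   Context: A slim partial linear space has exactly $3$ points per line; for distinct collinear points $u,v$, $uv$ denotes the line through them and $u\ast v$ the third point of that line. $d$ is the distance in the collinearity graph. A near hexagon is a connected partial linear space of diameter $3$ with no point collinear with all others such that every point has a unique nearest point on every line. A quad is a convex subset of diameter $2$ in which no point is collinear with all others; the near hexagon is dense if any two points at distance $2$ lie in a quad. A quad $Q$ is big if every point of $S$ has distance at most $1$ from $Q$. A subspace is a set of points containing every line meeting it in at least two points; the subspace generated by a set is the intersection of all subspaces containing it. *)

(* Defs.v *)
From Stdlib Require Import Arith.
Set Implicit Arguments.

Section Geometry.
Variable P : Type.
Variable L : (P -> Prop) -> Prop.

Definition slim_pls : Prop :=
  (forall l, L l -> exists a b c, a <> b /\ a <> c /\ b <> c /\
       forall p, l p <-> (p = a \/ p = b \/ p = c)) /\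
  (forall l m u v, L l -> L m -> u <> v -> l u -> l v -> m u -> m v ->
       forall p, l p <-> m p).

Definition collinear (u v : P) : Prop :=
  u <> v /\ exists l, L l /\ l u /\ l v.

Inductive walk : nat -> P -> P -> Prop :=
  | walk0 x : walk 0 x x
  | walkS n x y z : collinear x y -> walk n y z -> walk (S n) x z.

Definition dist (x y : P) (n : nat) : Prop :=
  walk n x y /\ forall m, m < n -> ~ walk m x y.

Definition near_hexagon : Prop :=
  (forall x y, exists n, walk n x y) /\
  (forall x y, exists n, n <= 3 /\ dist x y n) /\
  (exists x y, dist x y 3) /\
  (forall x, exists y, y <> x /\ ~ collinear x y) /\
  (forall x l, L l -> exists p, l p /\
     forall q, l q -> q <> p ->
       exists n m, dist x p n /\ dist x q m /\ n < m).

Definition on_walk (n : nat) (x y z : P) : Prop :=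
  exists a b, a + b = n /\ walk a x z /\ walk b z y.

Definition convex (X : P -> Prop) : Prop :=
  forall x y k z, X x -> X y -> dist x y k -> on_walk k x y z -> X z.

Definition quad (Q : P -> Prop) : Prop :=
  convex Q /\
  (forall x y, Q x -> Q y -> exists n, n <= 2 /\ dist x y n) /\
  (exists x y, Q x /\ Q y /\ dist x y 2) /\
  (forall x, Q x -> exists y, Q y /\ y <> x /\ ~ collinear x y).

Definition dense : Prop :=
  forall x y, dist x y 2 -> exists Q, quad Q /\ Q x /\ Q y.

Definition big_quad (Q : P -> Prop) : Prop :=
  quad Q /\ forall x, exists q, Q q /\ (dist x q 0 \/ dist x q 1).

Definition subspace (X : P -> Prop) : Prop :=
  forall l, L l -> (exists u v, u <> v /\ l u /\ l v /\ X u /\ X v) ->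
    forall p, l p -> X p.

Definition generated (A : P -> Prop) (p : P) : Prop :=
  forall X, subspace X -> (forall q, A q -> X q) -> X p.

(* the line uv equals the line u'v' (u,v distinct and collinear, same for
   u',v'; in a partial linear space the line through them is unique) *)
Definition same_line (u v u' v' : P) : Prop :=
  u <> v /\ u' <> v' /\ exists l, L l /\ l u /\ l v /\ l u' /\ l v'.

(* w = u * v : the third point of the line uv *)
Definition third (u v w : P) : Prop :=
  u <> v /\ w <> u /\ w <> v /\ exists l, L l /\ l u /\ l v /\ l w.

End Geometry.

(* Main.v *)
Require Import Defs.
From Stdlib Require Import Arith Lia ClassicalEpsilon Classical.

Definition dd {P : Type} (L : (P -> Prop) -> Prop) (x y : P) : nat :=
  epsilon (inhabits 0) (fun n => dist L x y n).

Lemma col_sym {P} {L : (P -> Prop) -> Prop} (u v : P) :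
  collinear L u v -> collinear L v u.
Proof. intros [H [l [Hl [Hu Hv]]]]. split; [congruence| exists l; auto]. Qed.

Lemma walk_snoc {P} {L : (P -> Prop) -> Prop} n (x y z : P) :
  walk L n x y -> collinear L y z -> walk L (S n) x z.
Proof.
  induction 1; intros.
  - econstructor; [eassumption| constructor].
  - econstructor; [eassumption| auto].
Qed.

Lemma walk_sym {P} {L : (P -> Prop) -> Prop} n (x y : P) :
  walk L n x y -> walk L n y x.
Proof.
  induction 1.
  - constructor.
  - eapply walk_snoc; eauto using col_sym.
Qed.

Lemma dist_uniq {P} {L : (P -> Prop) -> Prop} (x y : P) n m :
  dist L x y n -> dist L x y m -> n = m.
Proof.
  intros [H1 H2] [H3 H4].
  destruct (lt_eq_lt_dec n m) as [[h|h]|h]; auto.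
  - exfalso; eapply H4; eauto.
  - exfalso; eapply H2; eauto.
Qed.

Lemma dd_spec {P} {L : (P -> Prop) -> Prop} (NH : near_hexagon L) (x y : P) :
  dist L x y (dd L x y).
Proof.
  unfold dd. apply epsilon_spec.
  destruct NH as (_&HB&_).
  destruct (HB x y) as (n&_&Hn). eauto.
Qed.

Lemma dd_eq {P} {L : (P -> Prop) -> Prop} (NH : near_hexagon L) (x y : P) n :
  dist L x y n -> dd L x y = n.
Proof. intros H. eapply dist_uniq; [apply dd_spec; auto| exact H]. Qed.

Lemma dd_walk {P} {L : (P -> Prop) -> Prop} (NH : near_hexagon L) (x y : P) n :
  walk L n x y -> dd L x y <= n.
Proof.
  intros H. destruct (dd_spec NH x y) as [_ H2].
  destruct (le_lt_dec (dd L x y) n); auto.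
  exfalso; eapply H2; eauto.
Qed.

Lemma dd0 {P} {L : (P -> Prop) -> Prop} (NH : near_hexagon L) (x y : P) :
  dd L x y = 0 -> x = y.
Proof.
  intros H. destruct (dd_spec NH x y) as [W _]. rewrite H in W.
  inversion W; auto.
Qed.

Lemma dd_refl {P} {L : (P -> Prop) -> Prop} (NH : near_hexagon L) (x : P) :
  dd L x x = 0.
Proof. pose proof (dd_walk NH x x 0 (walk0 _ _)). lia. Qed.

Lemma dd1 {P} {L : (P -> Prop) -> Prop} (NH : near_hexagon L) (x y : P) :
  dd L x y = 1 -> collinear L x y.
Proof.
  intros H. destruct (dd_spec NH x y) as [W _]. rewrite H in W.
  inversion W; subst. inversion H2; subst. auto.
Qed.

Lemma col_dd1 {P} {L : (P -> Prop) -> Prop} (NH : near_hexagon L) (x y : P) :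
  collinear L x y -> dd L x y = 1.
Proof.
  intros H.
  assert (W : walk L 1 x y) by (econstructor; [eassumption| constructor]).
  pose proof (dd_walk NH _ _ _ W).
  destruct (Nat.eq_dec (dd L x y) 0) as [e|e].
  - apply dd0 in e; auto. destruct H; congruence.
  - lia.
Qed.

Lemma dd_sym {P} {L : (P -> Prop) -> Prop} (NH : near_hexagon L) (x y : P) :
  dd L x y = dd L y x.
Proof.
  destruct (dd_spec NH x y) as [W1 _]. destruct (dd_spec NH y x) as [W2 _].
  apply walk_sym in W1. apply walk_sym in W2.
  apply (dd_walk NH) in W1. apply (dd_walk NH) in W2. lia.
Qed.

Lemma tri {P} {L : (P -> Prop) -> Prop} (NH : near_hexagon L) (x y z : P) :
  collinear L y z -> dd L x z <= dd L x y + 1.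
Proof.
  intros H. destruct (dd_spec NH x y) as [W _].
  pose proof (walk_snoc _ _ _ _ W H) as W'.
  apply (dd_walk NH) in W'. lia.
Qed.

Lemma neq0 {P} {L : (P -> Prop) -> Prop} (NH : near_hexagon L) (x y : P) :
  x <> y -> dd L x y <> 0.
Proof. intros H e. apply (dd0 NH) in e. auto. Qed.

Lemma two_of {P} {L : (P -> Prop) -> Prop} (NH : near_hexagon L) (u v : P) :
  dd L u v <= 2 -> u <> v -> ~ collinear L u v -> dd L u v = 2.
Proof.
  intros h1 h2 h3. pose proof (neq0 NH _ _ h2).
  destruct (Nat.eq_dec (dd L u v) 1) as [e|e].
  - apply (dd1 NH) in e. contradiction.
  - lia.
Qed.

Lemma one_of {P} {L : (P -> Prop) -> Prop} (NH : near_hexagon L) (u v : P) :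
  dd L u v <= 1 -> u <> v -> collinear L u v.
Proof.
  intros h1 h2. pose proof (neq0 NH _ _ h2). apply (dd1 NH). lia.
Qed.

Lemma NPL {P} {L : (P -> Prop) -> Prop} (NH : near_hexagon L) (M : P -> Prop) (q : P) :
  L M -> exists p, M p /\ forall r, M r -> r <> p -> dd L q r = dd L q p + 1.
Proof.
  intros HM. pose proof NH as NH'.
  destruct NH' as (_&_&_&_&HE).
  destruct (HE q M HM) as (p&Hp&H). exists p; split; auto.
  intros r Hr Hrp. destruct (H r Hr Hrp) as (n&m&Hn&Hm&nm).
  apply (dd_eq NH) in Hn. apply (dd_eq NH) in Hm.
  assert (collinear L p r) by (split; [congruence| exists M; auto]).
  pose proof (tri NH q p r H0). lia.
Qed.

Definition line3p {P} (L : (P -> Prop) -> Prop) (K : P -> Prop) (u v t : P) : Prop :=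
  L K /\ K u /\ K v /\ K t /\ u <> v /\ u <> t /\ v <> t /\
  forall p, K p -> p = u \/ p = v \/ p = t.

Lemma line3_mk {P} {L : (P -> Prop) -> Prop} (SL : slim_pls L) (K : P -> Prop) u v :
  L K -> K u -> K v -> u <> v -> exists t, line3p L K u v t.
Proof.
  intros HK Hu Hv uv. destruct SL as [S1 _].
  destruct (S1 K HK) as (a&b&c&ab&ac&bc&HK').
  destruct (proj1 (HK' u) Hu) as [ -> | [ -> | -> ] ];
  destruct (proj1 (HK' v) Hv) as [ -> | [ -> | -> ] ]; try congruence;
  [exists c | exists b | exists c | exists a | exists b | exists a];
  (repeat split; try (apply HK'; tauto); try congruence;
   intros p Hp; apply HK' in Hp; tauto).
Qed.

Lemma col_line {P} {L : (P -> Prop) -> Prop} (SL : slim_pls L) (u v : P) :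
  collinear L u v -> exists K t, line3p L K u v t.
Proof.
  intros [uv [K [HK [Hu Hv]]]].
  destruct (line3_mk SL K u v HK Hu Hv uv) as [t Ht]. eauto.
Qed.

Lemma line_col {P} {L : (P -> Prop) -> Prop} (K : P -> Prop) (u v : P) :
  L K -> K u -> K v -> u <> v -> collinear L u v.
Proof. intros. split; auto. exists K; auto. Qed.

Lemma line_uniq {P} {L : (P -> Prop) -> Prop} (SL : slim_pls L) (K N : P -> Prop) u v p :
  L K -> L N -> u <> v -> K u -> K v -> N u -> N v -> K p -> N p.
Proof. intros. destruct SL as [_ S2]. eapply (S2 K N u v); eauto. Qed.

Lemma NPL3 {P} {L : (P -> Prop) -> Prop} (NH : near_hexagon L) K (k1 k2 k3 q : P) :
  line3p L K k1 k2 k3 ->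
  (dd L q k2 = dd L q k1 + 1 /\ dd L q k3 = dd L q k1 + 1) \/
  (dd L q k1 = dd L q k2 + 1 /\ dd L q k3 = dd L q k2 + 1) \/
  (dd L q k1 = dd L q k3 + 1 /\ dd L q k2 = dd L q k3 + 1).
Proof.
  intros (HK&h1&h2&h3&n12&n13&n23&H).
  destruct (NPL NH K q HK) as (p&Hp&Hr).
  destruct (H p Hp) as [ -> | [ -> | -> ] ].
  - left; split; apply Hr; auto.
  - right; left; split; apply Hr; auto.
  - right; right; split; apply Hr; auto.
Qed.

Lemma lemA {P} {L : (P -> Prop) -> Prop} (NH : near_hexagon L) K (u v p : P) :
  L K -> K u -> K v -> u <> v -> collinear L p u -> collinear L p v -> K p.
Proof.
  intros HK Hu Hv uv Cu Cv.
  pose proof (col_dd1 NH _ _ Cu). pose proof (col_dd1 NH _ _ Cv).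
  destruct (NPL NH K p HK) as (p0&Hp0&Hr).
  destruct (classic (p0 = u)) as [e|e].
  - subst p0. specialize (Hr v Hv (fun e => uv (eq_sym e))). lia.
  - destruct (classic (p0 = v)) as [e'|e'].
    + subst p0. specialize (Hr u Hu uv). lia.
    + specialize (Hr u Hu (fun h => e (eq_sym h))).
      assert (dd L p p0 = 0) by lia. apply (dd0 NH) in H1. subst; auto.
Qed.

Definition qlike {P} (L : (P -> Prop) -> Prop) (Q : P -> Prop) : Prop :=
  (forall u v, Q u -> Q v -> dd L u v <= 2) /\
  (forall u v p, Q u -> Q v -> dd L u v = 2 -> collinear L u p -> collinear L p v -> Q p).

Lemma quad_qlike {P} {L : (P -> Prop) -> Prop} (NH : near_hexagon L) Q :
  quad L Q -> qlike L Q.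
Proof.
  intros (Hc&Hd&_&_). split.
  - intros u v Hu Hv. destruct (Hd u v Hu Hv) as (n&hn&Hn).
    apply (dd_eq NH) in Hn. lia.
  - intros u v p Hu Hv e Cup Cpv.
    pose proof (dd_spec NH u v) as Hs. rewrite e in Hs.
    apply (Hc u v 2 p Hu Hv Hs).
    exists 1, 1. split; [reflexivity|]. split.
    + econstructor; [eassumption| constructor].
    + econstructor; [eassumption| constructor].
Qed.

Lemma Ysub {P} {L : (P -> Prop) -> Prop} (Y : P -> Prop) K (u v p : P) :
  subspace L Y -> L K -> K u -> K v -> u <> v -> Y u -> Y v -> K p -> Y p.
Proof. intros HY HK Hu Hv uv Yu Yv Kp. eapply (HY K HK); eauto 10. Qed.

Lemma Ytri {P} {L : (P -> Prop) -> Prop} (NH : near_hexagon L) (Y : P -> Prop) (p u v : P) :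
  subspace L Y -> ~ Y p -> Y u -> Y v -> u <> v -> collinear L u v ->
  collinear L p u -> collinear L p v -> False.
Proof.
  intros HY nYp Yu Yv uv [_ [K [HK [Ku Kv]]]] Cu Cv.
  apply nYp. eapply (Ysub Y K u v p HY HK Ku Kv uv Yu Yv).
  eapply (lemA NH K u v p); eauto.
Qed.

Lemma NoTwo {P} {L : (P -> Prop) -> Prop} (NH : near_hexagon L) (Y : P -> Prop) l (u v q : P) :
  L l -> (forall p, l p -> ~ Y p) -> l u -> l v -> u <> v -> Y q ->
  collinear L q u -> collinear L q v -> False.
Proof.
  intros Hl HlY lu lv uv Yq Cu Cv.
  apply (HlY q); auto. eapply (lemA NH l u v q); eauto.
Qed.

Lemma U1 {P} {L : (P -> Prop) -> Prop} (NH : near_hexagon L) (Y Q : P -> Prop) (p q q' : P) :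
  subspace L Y -> (forall r, Q r -> Y r) -> qlike L Q -> ~ Y p -> Q q -> Q q' ->
  collinear L p q -> collinear L p q' -> q = q'.
Proof.
  intros HY YQ [Hd Hc] nYp Qq Qq' C1 C2.
  destruct (classic (q = q')) as [e|e]; auto. exfalso.
  pose proof (Hd q q' Qq Qq'). pose proof (neq0 NH _ _ e).
  destruct (Nat.eq_dec (dd L q q') 1) as [e1|e1].
  - apply (dd1 NH) in e1. eapply (Ytri NH Y p q q'); eauto.
  - apply nYp. apply YQ. apply (Hc q q' p); auto; [lia| apply col_sym; auto].
Qed.

Lemma lemD {P} {L : (P -> Prop) -> Prop} (NH : near_hexagon L) (SL : slim_pls L)
  (Y Q : P -> Prop) (p pq r : P) :
  subspace L Y -> (forall r, Q r -> Y r) -> qlike L Q -> ~ Y p -> Q pq ->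
  collinear L p pq -> Q r -> dd L p r = dd L pq r + 1.
Proof.
  intros HY YQ HQ nYp Qpq C Qr.
  destruct (col_line SL _ _ C) as (K&t&Hl).
  pose proof Hl as (HK&Kp&Kpq&Kt&n1&n2&n3&H3).
  assert (nYt : ~ Y t).
  { intro Yt. apply nYp. eapply (Ysub Y K pq t p HY); eauto. }
  assert (d2 : dd L r pq <= 2) by (apply (proj1 HQ); auto).
  assert (rp : r <> p) by (intro; subst; auto).
  assert (rt : r <> t) by (intro; subst; auto).
  pose proof (neq0 NH _ _ rp). pose proof (neq0 NH _ _ rt).
  rewrite (dd_sym NH p r), (dd_sym NH pq r).
  destruct (NPL3 NH K p pq t r Hl) as [[e1 e2]|[[e1 e2]|[e1 e2]]].
  - exfalso. destruct (Nat.eq_dec (dd L r p) 1) as [e|e]; [|lia].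
    apply (dd1 NH), col_sym in e.
    assert (pq = r) by (eapply (U1 NH Y Q p); eauto). subst.
    rewrite (dd_refl NH) in e1. lia.
  - lia.
  - exfalso. destruct (Nat.eq_dec (dd L r t) 1) as [e|e]; [|lia].
    apply (dd1 NH), col_sym in e.
    assert (pq = r).
    { eapply (U1 NH Y Q t); eauto. apply (line_col K); auto. }
    subst. rewrite (dd_refl NH) in e2. lia.
Qed.

Lemma core {P} (L : (P -> Prop) -> Prop) (SL : slim_pls L) (NH : near_hexagon L)
  (Y Q1 Q2 : P -> Prop) (HY : subspace L Y)
  (HQ1 : qlike L Q1) (HQ2 : qlike L Q2)
  (Y1 : forall q, Q1 q -> Y q) (Y2 : forall q, Q2 q -> Y q)
  (B1 : forall p, ~ Y p -> exists q, Q1 q /\ collinear L p q)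
  (B2 : forall p, ~ Y p -> exists q, Q2 q /\ collinear L p q)
  (DJ : forall p, Q1 p -> ~ Q2 p)
  (l : P -> Prop) (x y w : P) (Hl : line3p L l x y w) (HlY : forall p, l p -> ~ Y p)
  (x1 x2 a y2 b : P)
  (Hx1 : Q1 x1) (Cxx1 : collinear L x x1) (Hx2 : Q2 x2) (Cxx2 : collinear L x x2)
  (Ha : Q1 a) (Cya : collinear L y a) (Cx2a : collinear L x2 a)
  (Hy2 : Q2 y2) (Cyy2 : collinear L y y2) (Hb : Q2 b) (Cx1b : collinear L x1 b) :
  third L x2 b y2.
Proof.
  Ltac dj DJ := match goal with H1: ?Q1 ?p, H2: ?Q2 ?p |- _ => exact (DJ _ H1 H2) end.
  pose proof Hl as (HLl & lx & ly & lw & xy & xw & yw & l3).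
  assert (nYx : ~ Y x) by auto. assert (nYy : ~ Y y) by auto. assert (nYw : ~ Y w) by auto.
  assert (Yx1 := Y1 _ Hx1). assert (Yx2 := Y2 _ Hx2). assert (Ya := Y1 _ Ha).
  assert (Yy2 := Y2 _ Hy2). assert (Yb := Y2 _ Hb).
  pose proof (col_dd1 NH _ _ Cxx1) as dxx1. pose proof (col_dd1 NH _ _ Cxx2) as dxx2.
  pose proof (col_dd1 NH _ _ Cya) as dya. pose proof (col_dd1 NH _ _ Cx2a) as dx2a.
  pose proof (col_dd1 NH _ _ Cyy2) as dyy2. pose proof (col_dd1 NH _ _ Cx1b) as dx1b.
  assert (nx1x2 : x1 <> x2) by (intro; subst; dj DJ).
  assert (nCx1x2 : ~ collinear L x1 x2).
  { intro C. eapply (Ytri NH Y x x1 x2); eauto. }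
  assert (Dx1x2 : dd L x1 x2 = 2).
  { apply (two_of NH); auto. pose proof (tri NH x1 x x2 Cxx2).
    rewrite (dd_sym NH x1 x) in H. lia. }
  assert (nx1a : x1 <> a).
  { intro; subst. apply nCx1x2. apply col_sym; auto. }
  assert (Dxa : dd L x a = 2).
  { apply (two_of NH); auto.
    - pose proof (tri NH x x2 a Cx2a). lia.
    - intro; subst; auto.
    - intro C. apply nx1a. eapply (U1 NH Y Q1 x); eauto. }
  assert (Cx1a : collinear L x1 a).
  { pose proof (lemD NH SL Y Q1 x x1 a HY Y1 HQ1 nYx Hx1 Cxx1 Ha).
    apply (one_of NH); auto. lia. }
  assert (nbx2 : b <> x2) by (intro; subst; auto).
  assert (Dxb : dd L x b = 2).
  { apply (two_of NH); auto.
    - pose proof (tri NH x x1 b Cx1b). lia.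
    - intro; subst; auto.
    - intro C. apply nbx2. symmetry. eapply (U1 NH Y Q2 x); eauto. }
  assert (Cx2b : collinear L x2 b).
  { pose proof (lemD NH SL Y Q2 x x2 b HY Y2 HQ2 nYx Hx2 Cxx2 Hb).
    apply (one_of NH); auto. lia. }
  destruct (col_line SL _ _ Cx2b) as (N & c & HN).
  destruct (col_line SL _ _ Cx2a) as (A & f & HA).
  destruct (col_line SL _ _ Cx1a) as (M & m & HM).
  pose proof HN as (HLN&Nx2&Nb&Nc&N1&N2&N3&N4).
  pose proof HA as (HLA&Ax2&Aa&Af&A1&A2&A3&A4).
  pose proof HM as (HLM&Mx1&Ma&Mm&M1&M2&M3&M4).
  assert (Yf : Y f) by (eapply (Ysub Y A x2 a f HY); eauto).
  assert (Dyx2 : dd L y x2 = 2).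
  { apply (two_of NH); auto.
    - pose proof (tri NH y x x2 Cxx2).
      pose proof (col_dd1 NH _ _ (line_col l y x HLl ly lx (fun e => xy (eq_sym e)))). lia.
    - intro; subst; auto.
    - intro C. eapply (NoTwo NH Y l x y x2); eauto using col_sym. }
  assert (nyf : y <> f) by (intro; subst; auto).
  assert (nxf : x <> f) by (intro; subst; auto).
  pose proof (neq0 NH _ _ nyf). pose proof (neq0 NH _ _ nxf).
  assert (Dyf : dd L y f = 2).
  { destruct (NPL3 NH A x2 a f y HA) as [[e1 e2]|[[e1 e2]|[e1 e2]]]; lia. }
  assert (Dxf : dd L x f = 2).
  { destruct (NPL3 NH A x2 a f x HA) as [[e1 e2]|[[e1 e2]|[e1 e2]]]; lia. }
  assert (Cwf : collinear L w f).
  { assert (nwf : f <> w) by (intro; subst; auto). pose proof (neq0 NH _ _ nwf).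
    rewrite (dd_sym NH x f) in Dxf. rewrite (dd_sym NH y f) in Dyf.
    destruct (NPL3 NH l x y w f Hl) as [[e1 e2]|[[e1 e2]|[e1 e2]]]; try lia.
    apply col_sym, (dd1 NH). lia. }
  destruct (col_line SL _ _ Cwf) as (B & h & HB).
  pose proof HB as (HLB&Bw&Bf&Bh&B1'&B2'&B3'&B4').
  assert (nYh : ~ Y h).
  { intro Yh. apply nYw. eapply (Ysub Y B f h w HY); eauto. }
  destruct (B1 w nYw) as (w1 & Hw1 & Cww1).
  destruct (B2 w nYw) as (w2 & Hw2 & Cww2).
  destruct (B1 h nYh) as (h1 & Hh1 & Chh1).
  destruct (B2 h nYh) as (h2 & Hh2 & Chh2).
  assert (Yw1 := Y1 _ Hw1). assert (Yw2 := Y2 _ Hw2).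
  assert (Yh1 := Y1 _ Hh1). assert (Yh2 := Y2 _ Hh2).
  assert (Cxw : collinear L x w) by (apply (line_col l); auto).
  assert (Cyw : collinear L y w) by (apply (line_col l); auto).
  pose proof (col_dd1 NH _ _ Cxw) as dxw. pose proof (col_dd1 NH _ _ Cyw) as dyw.
  assert (Cw1x1 : collinear L w1 x1).
  { pose proof (lemD NH SL Y Q1 w w1 x1 HY Y1 HQ1 nYw Hw1 Cww1 Hx1).
    pose proof (tri NH w x x1 Cxx1). rewrite (dd_sym NH w x) in H2.
    apply (one_of NH); [lia|].
    intro; subst. eapply (NoTwo NH Y l x w x1); eauto using col_sym. }
  assert (Cw1a : collinear L w1 a).
  { pose proof (lemD NH SL Y Q1 w w1 a HY Y1 HQ1 nYw Hw1 Cww1 Ha).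
    pose proof (tri NH w y a Cya). rewrite (dd_sym NH w y) in H2.
    apply (one_of NH); [lia|].
    intro; subst. eapply (NoTwo NH Y l y w a); eauto using col_sym. }
  assert (Dwa : dd L w a = 2).
  { pose proof (lemD NH SL Y Q1 w w1 a HY Y1 HQ1 nYw Hw1 Cww1 Ha).
    pose proof (col_dd1 NH _ _ Cw1a). lia. }
  assert (Cw2x2 : collinear L w2 x2).
  { pose proof (lemD NH SL Y Q2 w w2 x2 HY Y2 HQ2 nYw Hw2 Cww2 Hx2).
    pose proof (tri NH w x x2 Cxx2). rewrite (dd_sym NH w x) in H2.
    apply (one_of NH); [lia|].
    intro; subst. eapply (NoTwo NH Y l x w x2); eauto using col_sym. }
  assert (Dwx2 : dd L w x2 = 2).
  { pose proof (lemD NH SL Y Q2 w w2 x2 HY Y2 HQ2 nYw Hw2 Cww2 Hx2).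
    pose proof (col_dd1 NH _ _ Cw2x2). lia. }
  assert (Mw1 : M w1) by (eapply (lemA NH M x1 a w1); eauto).
  assert (Cah1 : collinear L h1 a).
  { assert (nah : a <> h) by (intro; subst; auto). pose proof (neq0 NH _ _ nah).
    assert (daf : dd L a f = 1) by (apply (col_dd1 NH), (line_col A); auto).
    rewrite (dd_sym NH w a) in Dwa.
    assert (e0 : dd L a h = 2).
    { destruct (NPL3 NH B w f h a HB) as [[e1 e2]|[[e1 e2]|[e1 e2]]]; lia. }
    pose proof (lemD NH SL Y Q1 h h1 a HY Y1 HQ1 nYh Hh1 Chh1 Ha) as e3.
    rewrite (dd_sym NH a h) in e0.
    apply (one_of NH); [lia|]. intro E. rewrite E in e3. rewrite (dd_refl NH) in e3. lia. }
  assert (Ch2x2 : collinear L h2 x2).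
  { assert (nah : x2 <> h) by (intro; subst; auto). pose proof (neq0 NH _ _ nah).
    assert (daf : dd L x2 f = 1) by (apply (col_dd1 NH), (line_col A); auto).
    rewrite (dd_sym NH w x2) in Dwx2.
    assert (e0 : dd L x2 h = 2).
    { destruct (NPL3 NH B w f h x2 HB) as [[e1 e2]|[[e1 e2]|[e1 e2]]]; lia. }
    pose proof (lemD NH SL Y Q2 h h2 x2 HY Y2 HQ2 nYh Hh2 Chh2 Hx2) as e3.
    rewrite (dd_sym NH x2 h) in e0.
    apply (one_of NH); [lia|]. intro E. rewrite E in e3. rewrite (dd_refl NH) in e3. lia. }
  assert (Dw1f : dd L w1 f = 2).
  { apply (two_of NH).
    - pose proof (tri NH w1 a f (line_col A a f HLA Aa Af A3)).
      pose proof (col_dd1 NH _ _ Cw1a). lia.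
    - intro; subst w1. apply nCx1x2.
      apply (line_col M); auto.
      eapply (line_uniq SL A M a f x2); eauto.
    - intro C. eapply (Ytri NH Y w w1 f); eauto.
      intro; subst w1. apply nCx1x2. apply (line_col M); auto.
      eapply (line_uniq SL A M a f x2); eauto. }
  assert (Ch1w1 : collinear L h1 w1).
  { assert (nah : w1 <> h) by (intro; subst; auto). pose proof (neq0 NH _ _ nah).
    pose proof (col_dd1 NH _ _ (col_sym _ _ Cww1)) as dw1w.
    assert (e0 : dd L w1 h = 2).
    { destruct (NPL3 NH B w f h w1 HB) as [[e1 e2]|[[e1 e2]|[e1 e2]]]; lia. }
    pose proof (lemD NH SL Y Q1 h h1 w1 HY Y1 HQ1 nYh Hh1 Chh1 Hw1) as e3.
    rewrite (dd_sym NH w1 h) in e0.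
    apply (one_of NH); [lia|]. intro E. rewrite E in e3. rewrite (dd_refl NH) in e3. lia. }
  assert (naw1 : a <> w1) by (intro; subst; destruct Cw1a; auto).
  assert (Mh1 : M h1) by (eapply (lemA NH M a w1 h1); eauto).
  assert (w1m : w1 = m).
  { destruct (M4 w1 Mw1) as [e|[e|e]]; auto; subst; [destruct Cw1x1| destruct Cw1a]; congruence. }
  subst m.
  assert (h1x1 : h1 = x1).
  { destruct (M4 h1 Mh1) as [e|[e|e]]; auto; subst; [destruct Cah1| destruct Ch1w1]; congruence. }
  subst h1.
  assert (Ch2b : collinear L h2 b).
  { pose proof (lemD NH SL Y Q2 h h2 b HY Y2 HQ2 nYh Hh2 Chh2 Hb).
    pose proof (tri NH h x1 b Cx1b). pose proof (col_dd1 NH _ _ Chh1).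
    apply (one_of NH); [lia|].
    intro; subst h2. eapply (Ytri NH Y h x1 b); eauto.
    intro; subst; dj DJ. }
  assert (Nh2 : N h2) by (eapply (lemA NH N x2 b h2); eauto).
  assert (h2c : h2 = c).
  { destruct (N4 h2 Nh2) as [e|[e|e]]; auto; subst; [destruct Ch2x2| destruct Ch2b]; congruence. }
  subst h2.
  assert (ncf : c <> f).
  { intro; subst f.
    assert (Na : N a) by (eapply (line_uniq SL A N x2 c a); eauto).
    destruct (N4 a Na) as [e|[e|e]]; subst; dj DJ. }
  assert (Cw2c : collinear L w2 c).
  { assert (n1 : c <> w) by (intro; subst; auto). pose proof (neq0 NH _ _ n1).
    pose proof (neq0 NH _ _ ncf).
    pose proof (col_dd1 NH _ _ (col_sym _ _ Chh2)) as dch.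
    assert (e0 : dd L c w = 2).
    { destruct (NPL3 NH B w f h c HB) as [[e1 e2]|[[e1 e2]|[e1 e2]]]; lia. }
    pose proof (lemD NH SL Y Q2 w w2 c HY Y2 HQ2 nYw Hw2 Cww2 Hh2) as e3.
    rewrite (dd_sym NH c w) in e0.
    apply (one_of NH); [lia|]. intro E. rewrite E in e3. rewrite (dd_refl NH) in e3. lia. }
  assert (Nw2 : N w2) by (eapply (lemA NH N x2 c w2); eauto).
  assert (w2b : w2 = b).
  { destruct (N4 w2 Nw2) as [e|[e|e]]; auto; subst; [destruct Cw2x2| destruct Cw2c]; congruence. }
  subst w2.
  assert (Cy2x2 : collinear L y2 x2).
  { pose proof (lemD NH SL Y Q2 y y2 x2 HY Y2 HQ2 nYy Hy2 Cyy2 Hx2).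
    apply (one_of NH); [lia|].
    intro; subst. eapply (NoTwo NH Y l x y x2); eauto using col_sym. }
  assert (Cy2b : collinear L y2 b).
  { pose proof (lemD NH SL Y Q2 y y2 b HY Y2 HQ2 nYy Hy2 Cyy2 Hb).
    pose proof (tri NH y w b Cww2).
    apply (one_of NH); [lia|].
    intro; subst. eapply (NoTwo NH Y l y w b); eauto using col_sym. }
  assert (Ny2 : N y2) by (eapply (lemA NH N x2 b y2); eauto).
  split; [auto|]. split; [intro; subst; destruct Cy2x2; congruence|].
  split; [intro; subst; destruct Cy2b; congruence|].
  exists N; auto.
Qed.

Lemma projcol {P} (L : (P -> Prop) -> Prop) (SL : slim_pls L) (NH : near_hexagon L)
  (Y Q : P -> Prop) (HY : subspace L Y) (HQ : qlike L Q) (YQ : forall q, Q q -> Y q)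
  l (Hl : L l) (HlY : forall p, l p -> ~ Y p) (p q p' q' : P) :
  l p -> l q -> p <> q -> Q p' -> collinear L p p' -> Q q' -> collinear L q q' ->
  collinear L p' q'.
Proof.
  intros lp lq pq Qp' Cp Qq' Cq.
  pose proof (lemD NH SL Y Q p p' q' HY YQ HQ (HlY p lp) Qp' Cp Qq').
  pose proof (tri NH p q q' Cq).
  pose proof (col_dd1 NH _ _ (line_col l p q Hl lp lq pq)).
  apply (one_of NH); [lia|].
  intro; subst. eapply (NoTwo NH Y l p q q'); eauto using col_sym.
Qed.

Lemma zcol {P} (L : (P -> Prop) -> Prop) (SL : slim_pls L) (NH : near_hexagon L)
  (Y Q1 Q2 : P -> Prop) (HY : subspace L Y)
  (HQ1 : qlike L Q1) (HQ2 : qlike L Q2)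
  (Y1 : forall q, Q1 q -> Y q) (Y2 : forall q, Q2 q -> Y q)
  (DJ : forall p, Q1 p -> ~ Q2 p) (x x1 x2 b : P) (nYx : ~ Y x)
  (Hx1 : Q1 x1) (Cxx1 : collinear L x x1) (Hx2 : Q2 x2) (Cxx2 : collinear L x x2)
  (Hb : Q2 b) (Cx1b : collinear L x1 b) : collinear L x2 b.
Proof.
  pose proof (col_dd1 NH _ _ Cxx1) as dxx1.
  assert (nCx1x2 : ~ collinear L x1 x2).
  { intro C. eapply (Ytri NH Y x x1 x2); eauto. intro; subst; eapply DJ; eauto. }
  assert (nbx2 : b <> x2) by (intro; subst; auto).
  assert (Dxb : dd L x b = 2).
  { apply (two_of NH); auto.
    - pose proof (tri NH x x1 b Cx1b). lia.
    - intro; subst; auto.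
    - intro C. apply nbx2. symmetry. eapply (U1 NH Y Q2 x); eauto. }
  pose proof (lemD NH SL Y Q2 x x2 b HY Y2 HQ2 nYx Hx2 Cxx2 Hb).
  apply (one_of NH); auto. lia.
Qed.

Lemma half {P} (L : (P -> Prop) -> Prop) (SL : slim_pls L) (NH : near_hexagon L)
  (Y Q1 Q2 : P -> Prop) (HY : subspace L Y)
  (HQ1 : qlike L Q1) (HQ2 : qlike L Q2)
  (Y1 : forall q, Q1 q -> Y q) (Y2 : forall q, Q2 q -> Y q)
  (B1 : forall p, ~ Y p -> exists q, Q1 q /\ collinear L p q)
  (B2 : forall p, ~ Y p -> exists q, Q2 q /\ collinear L p q)
  (DJ : forall p, Q1 p -> ~ Q2 p)
  (l : P -> Prop) (x y w : P) (Hl : line3p L l x y w) (HlY : forall p, l p -> ~ Y p)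
  (x1 x2 y1 a y2 b : P)
  (Hx1 : Q1 x1) (Cxx1 : collinear L x x1) (Hx2 : Q2 x2) (Cxx2 : collinear L x x2)
  (Hy1 : Q1 y1) (Cyy1 : collinear L y y1)
  (Ha : Q1 a) (Cx2a : collinear L x2 a)
  (Hy2 : Q2 y2) (Cyy2 : collinear L y y2) (Hb : Q2 b) (Cx1b : collinear L x1 b) :
  same_line L x1 y1 x1 a ->
  (y1 = a /\ third L x2 b y2) \/ (third L x1 a y1 /\ y2 = b).
Proof.
  intros (n1 & n2 & K & HK & Kx1 & Ky1 & _ & Ka).
  pose proof Hl as (HLl & lx & ly & lw & xy & xw & yw & l3).
  destruct (classic (y1 = a)) as [e|e].
  - subst y1. left. split; auto.
    exact (core L SL NH Y Q1 Q2 HY HQ1 HQ2 Y1 Y2 B1 B2 DJ l x y w Hl HlY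
      x1 x2 a y2 b Hx1 Cxx1 Hx2 Cxx2 Ha Cyy1 Cx2a Hy2 Cyy2 Hb Cx1b).
  - right. split; [repeat split; auto; exists K; auto|].
    assert (nYw : ~ Y w) by auto.
    destruct (B1 w nYw) as (w1 & Hw1 & Cww1).
    destruct (B2 w nYw) as (w2 & Hw2 & Cww2).
    assert (C1 : collinear L w1 x1)
      by (eapply (projcol L SL NH Y Q1 HY HQ1 Y1 l HLl HlY w x); eauto).
    assert (C2 : collinear L w1 y1)
      by (eapply (projcol L SL NH Y Q1 HY HQ1 Y1 l HLl HlY w y); eauto).
    assert (Kw1 : K w1) by (eapply (lemA NH K x1 y1 w1); eauto).
    destruct (line3_mk SL K x1 y1 HK Kx1 Ky1 n1) as (t & (_&_&_&_&_&_&_&K4)).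
    assert (at' : a = t) by (destruct (K4 a Ka) as [E|[E|E]]; congruence).
    assert (w1a : w1 = a).
    { destruct (K4 w1 Kw1) as [E|[E|E]]; subst; auto;
      [destruct C1| destruct C2]; congruence. }
    subst w1.
    assert (Hl' : line3p L l x w y).
    { repeat split; auto. intros p lp. destruct (l3 p lp) as [E|[E|E]]; auto. }
    assert (T : third L x2 b w2).
    { exact (core L SL NH Y Q1 Q2 HY HQ1 HQ2 Y1 Y2 B1 B2 DJ l x w y Hl' HlY
      x1 x2 a w2 b Hx1 Cxx1 Hx2 Cxx2 Ha Cww1 Cx2a Hw2 Cww2 Hb Cx1b). }
    destruct T as (m1 & m2 & m3 & N & HN & Nx2 & Nb & Nw2).
    assert (C3 : collinear L y2 x2)
      by (eapply (projcol L SL NH Y Q2 HY HQ2 Y2 l HLl HlY y x); eauto).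
    assert (C4 : collinear L y2 w2)
      by (eapply (projcol L SL NH Y Q2 HY HQ2 Y2 l HLl HlY y w); eauto).
    assert (Ny2 : N y2) by (eapply (lemA NH N x2 w2 y2); eauto).
    destruct (line3_mk SL N x2 b HN Nx2 Nb m1) as (t' & (_&_&_&_&_&_&_&N4)).
    assert (w2 = t') by (destruct (N4 w2 Nw2) as [E|[E|E]]; congruence).
    subst t'.
    destruct (N4 y2 Ny2) as [E|[E|E]]; subst; auto;
      [destruct C3| destruct C4]; congruence.
Qed.
Theorem proposition2p4 (P : Type) (L : (P -> Prop) -> Prop)
  (Q1 Q2 : P -> Prop) (l : P -> Prop)
  (x y x1 x2 y1 y2 a b : P) :
  slim_pls L -> near_hexagon L -> dense L ->
  big_quad L Q1 -> big_quad L Q2 -> (forall p, Q1 p -> ~ Q2 p) ->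
  L l -> (forall p, l p -> ~ generated L (fun q => Q1 q \/ Q2 q) p) ->
  l x -> l y -> x <> y ->
  (* x1 = x^1, x2 = x^2, y1 = y^1, y2 = y^2 *)
  Q1 x1 -> dist L x x1 1 -> Q2 x2 -> dist L x x2 1 ->
  Q1 y1 -> dist L y y1 1 -> Q2 y2 -> dist L y y2 1 ->
  (* a = z_{x^2} (in Q1), b = z_{x^1} (in Q2) *)
  Q1 a -> dist L x2 a 1 -> Q2 b -> dist L x1 b 1 ->
  (same_line L x1 y1 x1 a <-> same_line L x2 y2 x2 b) /\
  (same_line L x1 y1 x1 a ->
     (y1 = a /\ third L x2 b y2) \/ (third L x1 a y1 /\ y2 = b)).
Proof.
  intros SL NH _ [Qd1 Bg1] [Qd2 Bg2] DJ HLl HlY lx ly xy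
    Hx1 dx1 Hx2 dx2 Hy1 dy1 Hy2 dy2 Ha da Hb db.
  set (Y := generated L (fun q => Q1 q \/ Q2 q)) in *.
  assert (HY : subspace L Y).
  { intros K HK (u&v&uv&Ku&Kv&Yu&Yv) p Kp X HX HA.
    apply (HX K HK); [|exact Kp].
    exists u, v. split; [exact uv|]. split; [exact Ku|]. split; [exact Kv|].
    split; [exact (Yu X HX HA)| exact (Yv X HX HA)]. }
  assert (Y1 : forall q, Q1 q -> Y q) by (intros q Hq X _ HA; auto).
  assert (Y2 : forall q, Q2 q -> Y q) by (intros q Hq X _ HA; auto).
  pose proof (quad_qlike NH _ Qd1) as HQ1.
  pose proof (quad_qlike NH _ Qd2) as HQ2.
  assert (B1 : forall p, ~ Y p -> exists q, Q1 q /\ collinear L p q).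
  { intros p nY. destruct (Bg1 p) as (q & Hq & [D|D]).
    - apply (dd_eq NH) in D. apply (dd0 NH) in D. subst. exfalso; auto.
    - exists q; split; auto. apply (dd1 NH). apply (dd_eq NH); auto. }
  assert (B2 : forall p, ~ Y p -> exists q, Q2 q /\ collinear L p q).
  { intros p nY. destruct (Bg2 p) as (q & Hq & [D|D]).
    - apply (dd_eq NH) in D. apply (dd0 NH) in D. subst. exfalso; auto.
    - exists q; split; auto. apply (dd1 NH). apply (dd_eq NH); auto. }
  assert (DJ' : forall p, Q2 p -> ~ Q1 p) by (intros p h1 h2; exact (DJ p h2 h1)).
  apply (dd_eq NH), (dd1 NH) in dx1, dx2, dy1, dy2, da, db.
  destruct (line3_mk SL l x y HLl lx ly xy) as (w & Hl).
  assert (Hl' : line3p L l x y w) by exact Hl.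
  assert (nYx : ~ Y x) by auto.
  pose proof (half L SL NH Y Q1 Q2 HY HQ1 HQ2 Y1 Y2 B1 B2 DJ l x y w Hl HlY
      x1 x2 y1 a y2 b Hx1 dx1 Hx2 dx2 Hy1 dy1 Ha da Hy2 dy2 Hb db) as H12.
  pose proof (half L SL NH Y Q2 Q1 HY HQ2 HQ1 Y2 Y1 B2 B1 DJ' l x y w Hl HlY
      x2 x1 y2 b y1 a Hx2 dx2 Hx1 dx1 Hy2 dy2 Hb db Hy1 dy1 Ha da) as H21.
  assert (C2 : collinear L x2 b)
    by exact (zcol L SL NH Y Q1 Q2 HY HQ1 HQ2 Y1 Y2 DJ x x1 x2 b nYx Hx1 dx1 Hx2 dx2 Hb db).
  assert (C1 : collinear L x1 a)
    by exact (zcol L SL NH Y Q2 Q1 HY HQ2 HQ1 Y2 Y1 DJ' x x2 x1 a nYx Hx2 dx2 Hx1 dx1 Ha da).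
  split; [split|exact H12].
  - intro H. destruct (H12 H) as [[_ (n1&n2&n3&N&HN&N1&N2&N3)]|[_ e]].
    + split; [auto|]. split; [auto|]. exists N; auto.
    + subst y2. destruct C2 as (n & N & HN & N1 & N2).
      split; auto. split; auto. exists N; auto.
  - intro H. destruct (H21 H) as [[_ (n1&n2&n3&N&HN&N1&N2&N3)]|[_ e]].
    + split; [auto|]. split; [auto|]. exists N; auto.
    + subst y1. destruct C1 as (n & N & HN & N1 & N2).
      split; auto. split; auto. exists N; auto.
Qed.
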